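(* Let $G$ be a finite simple graph with $n$ vertices and minimum degree $\delta > 1$. Let $\widehat{\delta} = \lfloor 0.5\,\delta \rfloor$, let $\delta' = \delta$ if $\delta$ is odd and $\delta' = \delta+1$ if $\delta$ is even, and let $\widetilde{d}_{0.5} = \binom{\delta'+1}{\lceil 0.5\,\delta' \rceil}$. Then $$\gamma_s(G) \le \left(1 - \frac{2\widehat{\delta}}{(1+\widehat{\delta})^{1+1/\widehat{\delta}}\,\widetilde{d}_{0.5}^{\;1/\widehat{\delta}}}\right) n.$$
   Context: For a vertex $v$ of $G$, $N[v]$ denotes the closed neighbourhood of $v$ (i.e. $v$ together with its neighbours). A signed domination function of $G$ is a function $f: V(G) \to \{-1, 1\}$ such that $\sum_{x \in N[v]} f(x) \ge 1$ for every vertex $v \in V(G)$. The weight of $f$ is $f(V(G)) = \sum_{v \in V(G)} f(v)$. The signed domination number $\gamma_s(G)$ is the minimum weight of a signed domination function of $G$. *)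

(* Defs.v *)
From HB Require Import structures.
From mathcomp Require Import all_boot all_order all_algebra.
From mathcomp Require Import all_classical all_reals all_analysis.
Set Implicit Arguments. Unset Strict Implicit. Unset Printing Implicit Defensive.
Import Order.TTheory GRing.Theory Num.Theory.
Local Open Scope ring_scope.

Definition simple_graph (T : finType) (e : rel T) : Prop :=
  symmetric e /\ irreflexive e.

Definition deg (T : finType) (e : rel T) (v : T) : nat := #|[set u | e v u]|.

Definition is_min_degree (T : finType) (e : rel T) (d : nat) : Prop :=
  (forall v, (d <= deg e v)%N) /\ (exists v, deg e v = d).

Definition cnbhd (T : finType) (e : rel T) (v : T) : {set T} :=
  v |: [set u | e v u].

(* A function f : V -> {-1,1}, encoded as a boolean function
   (true = +1, false = -1). *)
Definition sval (b : bool) : int := if b then 1 else -1.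

Definition sweight (T : finType) (f : {ffun T -> bool}) (A : {set T}) : int :=
  \sum_(x in A) sval (f x).

Definition is_sdf (T : finType) (e : rel T) (f : {ffun T -> bool}) : bool :=
  [forall v, 1 <= sweight f (cnbhd e v)].

Definition weight (T : finType) (f : {ffun T -> bool}) : int := sweight f [set: T].

(* signed domination number: minimum weight of a signed domination function
   (the all-(+1) function is always one, used as the default of the min). *)
Definition gamma_s (T : finType) (e : rel T) : int :=
  \big[Order.min/weight [ffun _ : T => true]]_(f : {ffun T -> bool} | is_sdf e f)
     weight f.

(* Main.v *)
Require Import Defs.
From HB Require Import structures.
From mathcomp Require Import all_boot all_order all_algebra.
From mathcomp Require Import all_classical all_reals all_analysis.
From mathcomp Require Import zify ring lra.
Import Order.TTheory GRing.Theory Num.Theory.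
Local Open Scope ring_scope.

Set Implicit Arguments. Unset Strict Implicit.

Definition exc (T : finType) (e : rel T) (K : T -> nat) (A : {set T}) (v : T) : nat :=
  (#|A :&: cnbhd e v| - K v)%N.

Lemma exists_M (T : finType) (e : rel T) (K : T -> nat) (A : {set T}) :
  exists M : {set T}, [/\ M \subset A, (forall v, #|M :&: cnbhd e v| <= K v)%N &
     (#|A| <= #|M| + \sum_v exc e K A v)%N].
Proof.
move: {2}#|A| (leqnn #|A|) => n; elim: n A => [|n IH] A hA.
  exists A; split => //; last by rewrite leq_addr.
  move=> v; have : #|A| = 0%N by lia.
  move/eqP; rewrite cards_eq0 => /eqP ->; by rewrite finset.set0I cards0.
case: (boolP [forall v, #|A :&: cnbhd e v| <= K v]%N) => [/forallP H|].
  by exists A; split => //; rewrite leq_addr.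
rewrite negb_forall => /existsP [v]; rewrite -ltnNge => Hv.
have : (0 < #|A :&: cnbhd e v|)%N by lia.
rewrite card_gt0 => /set0Pn [x Hx].
have HxA : x \in A by move: Hx; rewrite inE => /andP [].
have [M [HM1 HM2 HM3]] := IH (A :\ x) (ltac:(rewrite (cardsD1 x A) HxA in hA; lia)).
exists M; split => //.
  exact: (fintype.subset_trans HM1 (subsetDl _ _)).
have HAx : #|A| = (#|A :\ x| + 1)%N by rewrite (cardsD1 x A) HxA addnC.
have Hs : (\sum_u exc e K (A :\ x) u + 1 <= \sum_u exc e K A u)%N.
  rewrite (bigD1 v) //= [X in (_ <= X)%N](bigD1 v) //=.
  have Hle : (\sum_(u | u != v) exc e K (A :\ x) u <= \sum_(u | u != v) exc e K A u)%N.
    apply: leq_sum => u _; rewrite /exc; apply: leq_sub2r.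
    by apply: subset_leq_card; apply: finset.setSI; apply: subsetDl.
  have Hv2 : #|(A :\ x) :&: cnbhd e v| = (#|A :&: cnbhd e v| - 1)%N.
    rewrite finset.setIDAC (cardsD1 x (A :&: cnbhd e v)) Hx; lia.
  rewrite /exc Hv2 /exc in Hle *; lia.
lia.
Qed.

Lemma sweight_notin (T : finType) (S M : {set T}) :
  sweight [ffun x => x \notin M] S = #|S|%:Z - 2 * #|S :&: M|%:Z.
Proof.
rewrite /sweight (big_setID M) /=.
rewrite (eq_bigr (fun _ => -1)); last by move=> x; rewrite inE ffunE => /andP [_ ->].
rewrite [X in _ + X](eq_bigr (fun _ => 1)); last by move=> x; rewrite inE ffunE => /andP [/negbTE -> _].
rewrite !sumr_const -(cardsID M S).
rewrite mulNrn natz PoszD; lia.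
Qed.

Definition wt (R : realType) (T : finType) (p : R) (f : {ffun T -> bool}) : R :=
  \prod_x (if f x then p else 1 - p).

Lemma L1 (R : realType) (T : finType) (p : R) (B : {set T}) :
  \sum_(f : {ffun T -> bool}) wt p f * (B \subset [set x | f x])%:R = p ^+ #|B|.
Proof.
transitivity (\sum_(f : {ffun T -> bool}) \prod_x
    (fun x b => if b then p else if x \in B then 0 else 1 - p) x (f x)).
  apply: eq_bigr => f _.
  case: (boolP (B \subset [set x | f x])) => H.
    rewrite mulr1; apply: eq_bigr => x _ /=.
    case fx: (f x) => //.
    case: (boolP (x \in B)) => // xB.
    by move/fintype.subsetP: H => /(_ x xB); rewrite inE fx.
  rewrite mulr0; case/fintype.subsetPn: H => x xB; rewrite inE => fx.
  by rewrite (bigD1 x) //= (negbTE fx) xB mul0r.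
rewrite -(bigA_distr_bigA (fun x b => if b then p else if x \in B then 0 else 1 - p)).
rewrite (bigID (mem B)) /=.
rewrite [X in _ * X]big1; last by move=> x /negbTE; rewrite big_bool /= => ->; rewrite addrC subrK.
rewrite mulr1 -prodr_const; apply: eq_bigr => x xB.
by rewrite big_bool /= xB addr0.
Qed.

Lemma wt_gt0 (R : realType) (T : finType) (p : R) (f : {ffun T -> bool}) : 0 < p < 1 -> 0 < wt p f.
Proof.
move=> /andP [p0 p1]; apply: prodr_gt0 => x _; case: (f x) => //.
by rewrite subr_gt0.
Qed.

Lemma sum_wt (R : realType) (T : finType) (p : R) :
  \sum_(f : {ffun T -> bool}) wt p f = 1.
Proof.
rewrite -(expr0 p) -(cards0 T) -(L1 p (finset.set0 : {set T})).
by apply: eq_bigr => f _; rewrite finset.sub0set mulr1.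
Qed.

Lemma sum_card (R : realType) (T : finType) (p : R) :
  \sum_(f : {ffun T -> bool}) wt p f * (#|[set x | f x]|)%:R = p * #|T|%:R.
Proof.
transitivity (\sum_f \sum_(x : T) wt p f * ([set x] \subset [set y | f y])%:R).
  apply: eq_bigr => f _; rewrite -mulr_sumr; congr (_ * _).
  rewrite -sum1_card big_mkcond /= natr_sum; apply: eq_bigr => x _.
  by rewrite finset.sub1set; case: (x \in _).
rewrite exchange_big /=.
rewrite (eq_bigr (fun _ => p)); last by move=> x _; rewrite L1 cards1 expr1.
by rewrite sumr_const mulr_natr.
Qed.

Lemma card_draws_sum (T : finType) (A S : {set T}) k :
  'C(#|A :&: S|, k) = (\sum_(B : {set T} | (B \subset S) && (#|B| == k)) (B \subset A))%N.
Proof.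
rewrite -cards_draws -sum1_card big_mkcond /= [RHS]big_mkcond /=.
apply: eq_bigr => B _; rewrite !inE finset.subsetI.
by case: (B \subset A); case: (B \subset S); case: (#|B| == k).
Qed.

Lemma sum_draws (R : realType) (T : finType) (p : R) (S : {set T}) k :
  \sum_(f : {ffun T -> bool}) wt p f * ('C(#|[set x | f x] :&: S|, k))%:R = ('C(#|S|, k))%:R * p ^+ k.
Proof.
transitivity (\sum_f \sum_(B : {set T} | (B \subset S) && (#|B| == k))
   wt p f * (B \subset [set x | f x])%:R).
  by apply: eq_bigr => f _; rewrite card_draws_sum natr_sum mulr_sumr.
rewrite exchange_big /=.
rewrite (eq_bigr (fun _ => p ^+ k)); last by move=> B /andP [_ /eqP <-]; rewrite L1.
rewrite sumr_const mulr_natl -cards_draws; congr (_ *+ _).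
by apply: eq_card => B; rewrite !inE.
Qed.

Lemma averaging (R : realType) (T : finType) (p : R) (X : {ffun T -> bool} -> R) (c : R) :
  0 < p < 1 -> c <= \sum_f wt p f * X f -> exists f, c <= X f.
Proof.
move=> hp hc.
case: (boolP [exists f, c <= X f]) => [/existsP [f Hf]|]; first by exists f.
rewrite negb_exists => /forallP H; exfalso.
have : \sum_(f : {ffun T -> bool}) wt p f * X f < \sum_(f : {ffun T -> bool}) wt p f * c.
  apply: ltr_sum; first by apply/hasP; exists [ffun => true]; rewrite ?mem_index_enum.
  by move=> f _; rewrite (ltr_pM2l (wt_gt0 _ hp)) ltNge H.
by rewrite -mulr_suml sum_wt mul1r ltNge hc.
Qed.

Lemma bin_ge m k : (m - k <= 'C(m, k.+1))%N.
Proof.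
elim: m => [|m IH] //=; rewrite binS.
case: (leqP k m) => H; last lia.
have := bin_gt0 m k; rewrite H; lia.
Qed.

Lemma bin_eqs k :
  ('C(k.*2.+4, k.+2) = 2 * 'C(k.*2.+3, k.+1))%N /\
  (k.+2 * 'C(k.*2.+3, k.+1) = k.*2.+3 * 'C(k.*2.+2, k.+1))%N.
Proof.
have h1 := mul_bin_diag (k.*2.+4) k.+1.
have h2 := mul_bin_down (k.*2.+3) k.+1.
simpl in h1, h2.
have e3 : (k.*2.+3 - k.+1 = k.+2)%N by lia.
rewrite e3 in h2; split; last by rewrite h2.
apply/eqP; rewrite -(eqn_pmul2l (ltn0Sn k.+1)); apply/eqP; nia.
Qed.

Lemma bin_step k : ('C(k.*2.+4, k.+2) <= 4 * 'C(k.*2.+2, k.+1))%N.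
Proof.
have [e1 e2] := bin_eqs k.
rewrite e1.
have : (k.+2 * 'C(k.*2.+3, k.+1) <= k.+2 * (2 * 'C(k.*2.+2, k.+1)))%N.
  rewrite e2; nia.
rewrite leq_pmul2l //; lia.
Qed.

Lemma central_lb h : (4 ^ h <= h.+1 * 'C(h.*2.+2, h.+1))%N.
Proof.
elim: h => [|h IH]; first by rewrite bin1.
have [e1 e2] := bin_eqs h.
rewrite doubleS e1 expnS.
nia.
Qed.

Lemma bin_half d : ('C(d.+1, d./2.+1) <= 'C((d./2).*2.+2, d./2.+1))%N.
Proof.
set k := d./2.
have Hd : d = (odd d + k.*2)%N by rewrite odd_double_half.
case: (odd d) in Hd; rewrite {1}Hd.
  by rewrite add1n.
by rewrite add0n binS leq_addr.
Qed.

Unset Implicit Arguments. Set Strict Implicit.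

Lemma g_mono (R : realType) (p : R) : 0 <= p -> 4 * p <= 1 -> forall k j,
  ('C((k + j).*2.+2, (k + j).+1))%:R * p ^+ (k + j).+1 <=
  ('C(k.*2.+2, k.+1))%:R * p ^+ k.+1.
Proof.
move=> p0 p4 k; elim=> [|j IH]; first by rewrite addn0.
apply: le_trans IH; rewrite addnS; set m := (k + j)%N.
rewrite doubleS exprS.
have hb : ('C(m.*2.+4, m.+2))%:R <= 4 * ('C(m.*2.+2, m.+1))%:R :> R.
  by rewrite -natrM ler_nat bin_step.
have q0 : 0 <= p ^+ m.+1 by rewrite exprn_ge0.
have b0 : 0 <= ('C(m.*2.+2, m.+1))%:R :> R by [].
apply: (le_trans (y := (4 * ('C(m.*2.+2, m.+1))%:R) * (p * p ^+ m.+1))).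
  by apply: ler_wpM2r => //; rewrite mulr_ge0.
have hc : 0 <= ('C(m.*2.+2, m.+1))%:R * p ^+ m.+1 :> R by rewrite mulr_ge0.
move: hc p4; generalize (('C(m.*2.+2, m.+1))%:R : R) (p ^+ m.+1) => a q hc p4'.
nra.
Qed.

Lemma sdf_arith (d m : nat) : (m <= d./2)%N -> (1 <= (d.+1)%:Z - 2 * m%:Z)%R.
Proof. have := odd_double_half d; move=> H1 H2; lia. Qed.

Lemma card_cnbhd (T : finType) (e : rel T) v : irreflexive e ->
  #|cnbhd e v| = (deg e v).+1.
Proof.
move=> irr; rewrite /cnbhd /deg cardsU1 inE irr.
by rewrite add1n.
Qed.

Theorem theorem4 (R : realType) (T : finType) (e : rel T) (delta : nat) :
  simple_graph e ->
  is_min_degree e delta ->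
  (1 < delta)%N ->
  let dhat : nat := delta./2 in
  let delta' : nat := if odd delta then delta else delta.+1 in
  let dtil : nat := 'C(delta'.+1, uphalf delta') in
  ((gamma_s e)%:~R : R) <=
    (1 - (2 * dhat%:R) /
         ((1 + dhat%:R) `^ (1 + (dhat%:R)^-1) * (dtil%:R) `^ ((dhat%:R)^-1)))
    * (#|T|%:R).
Proof.
move=> [esym eirr] [mindeg _] hdelta.
cbv zeta.
set h := delta./2.
have hh1 : (1 <= h)%N by exact: (half_leq hdelta).
have hD' : (if odd delta then delta else delta.+1) = h.*2.+1.
  rewrite /h; have := odd_double_half delta.
  by case: (odd delta) => /= Hd; lia.
rewrite hD' uphalfE -doubleS doubleK.
set hr : R := h%:R.
set Dn := 'C(h.*2.+2, h.+1).
set D : R := Dn%:R.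
have hr0 : 0 < hr by rewrite ltr0n.
have D0 : 0 < D by rewrite ltr0n bin_gt0; lia.
set a : R := (1 + hr) * D.
have a0 : 0 < a by rewrite mulr_gt0 // addr_gt0.
set r : R := a `^ hr^-1.
have hrh : r ^+ h = a.
  rewrite /r -powR_mulrn ?powR_ge0 // -powRrM mulVf ?powRr1 ?ltW //.
  by rewrite gt_eqF.
have a4 : 4 ^+ h <= a.
  rewrite /a /D /hr addrC natr1 -natrM -natrX ler_nat.
  exact: central_lb.
have r0 : 0 <= r by apply: powR_ge0.
have r4 : 4 <= r.
  rewrite leNgt; apply/negP => Hlt.
  have := ltrXn2r h r0 Hlt; rewrite hrh.
  have -> : (h != 0)%N by lia.
  by rewrite ltNge a4.
have rpos : 0 < r by apply: lt_le_trans r4.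
set p : R := r^-1.
have p0 : 0 < p by rewrite invr_gt0.
have p4 : 4 * p <= 1.
  by rewrite /p -(ler_pM2l rpos) mulrCA mulfV ?gt_eqF // !mulr1.
have p1 : p < 1 by lra.
have hp : 0 < p < 1 by rewrite p0 p1.
have hph : p ^+ h = a^-1 by rewrite /p exprVn hrh.
have hQ : (1 + hr) `^ (1 + hr^-1) * D `^ hr^-1 = (1 + hr) * r.
  rewrite powRD; last by apply/implyP => _; rewrite gt_eqF // addr_gt0.
  rewrite powRr1 ?ltW ?addr_gt0 // -mulrA; congr (_ * _).
  by rewrite /r /a powRM // ltW // addr_gt0.
rewrite hQ.
set K := fun v => (deg e v)./2.
have Hv : forall v, \sum_(f : {ffun T -> bool}) wt p f * (exc e K [set x | f x] v)%:R
    <= p / (1 + hr).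
  move=> v.
  apply: (le_trans (y := \sum_(f : {ffun T -> bool}) wt p f *
     ('C(#|[set x | f x] :&: cnbhd e v|, (K v).+1))%:R)).
    apply: ler_sum => f _; apply: ler_wpM2l; first exact/ltW/wt_gt0.
    by rewrite ler_nat /exc bin_ge.
  rewrite sum_draws card_cnbhd //.
  have hk : (h <= K v)%N by rewrite /K /h; apply: half_leq; exact: mindeg.
  apply: (le_trans (y := ('C((K v).*2.+2, (K v).+1))%:R * p ^+ (K v).+1)).
    by apply: ler_wpM2r; [rewrite exprn_ge0 // ltW | rewrite ler_nat; exact: bin_half].
  have := @g_mono R p (ltW p0) p4 h (K v - h); rewrite subnKC //.
  move/le_trans; apply.
  rewrite exprS hph /a -/D.
  have -> : D * (p / ((1 + hr) * D)) = p / (1 + hr).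
    field; apply/andP; split; by rewrite gt_eqF // ?addr_gt0.
  by [].
set X := fun f : {ffun T -> bool} =>
   (#|[set x | f x]|)%:R - \sum_v (exc e K [set x | f x] v)%:R : R.
set c : R := hr * p / (1 + hr) * #|T|%:R.
have Hc : c <= \sum_f wt p f * X f.
  rewrite /X.
  under eq_bigr do rewrite mulrBr.
  rewrite sumrB sum_card.
  under eq_bigr do rewrite mulr_sumr.
  rewrite exchange_big /=.
  have HH : \sum_(v : T) \sum_(f : {ffun T -> bool}) wt p f * (exc e K [set x | f x] v)%:R
     <= p / (1 + hr) * #|T|%:R.
    apply: le_trans (ler_sum _ (fun v _ => Hv v)) _.
    by rewrite sumr_const mulr_natr.
  have -> : c = p * #|T|%:R - p / (1 + hr) * #|T|%:R.
    rewrite /c; field; rewrite gt_eqF // addr_gt0 //.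
  by apply: lerB.
have [f Hf] := averaging hp Hc.
have [M [_ HM2 HM3]] := exists_M e K [set x | f x].
have HXM : X f <= #|M|%:R.
  rewrite /X lerBlDr -natr_sum -natrD ler_nat; exact: HM3.
have Hsdf : is_sdf e [ffun x => x \notin M].
  apply/forallP => v; rewrite sweight_notin card_cnbhd // finset.setIC.
  exact: sdf_arith (HM2 v).
have Hg : gamma_s e <= weight [ffun x => x \notin M].
  exact: bigmin_le_cond.
rewrite /weight sweight_notin cardsT finset.setTI in Hg.
have Hg' : (gamma_s e)%:~R <= (#|T|%:R - 2 * #|M|%:R : R).
  move: Hg; rewrite -(ler_int R) => Hg; apply: (le_trans Hg).
  by rewrite rmorphB rmorphM /=.
apply: (le_trans Hg').
have -> : (1 - 2 * hr / ((1 + hr) * r)) * #|T|%:R = #|T|%:R - 2 * c.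
  rewrite /c /p; field.
  by rewrite !gt_eqF // addr_gt0.
lra.
Qed.
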